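(* Any set of reflections of $G_6$ containing at least one element of $R'=R_1\cup R_1^{-1}$ and at least one element of $S$ generates the entire group $G_6$.
   Context: Let $G_7$ be the subgroup of $GL_2(\mathbb{C})$ generated by $s=\begin{bmatrix}1&0\\0&-1\end{bmatrix}$, $t=\frac14\begin{bmatrix}(1+\sqrt3)+(-1+\sqrt3)i & (1+\sqrt3)+(-1+\sqrt3)i\\ (-1+\sqrt3)-(1+\sqrt3)i & (1-\sqrt3)+(1+\sqrt3)i\end{bmatrix}$ and $u=t^{\top}$ (presentation $\langle s,t,u\mid s^2=t^3=u^3=1,\ stu=ust=tus\rangle$, order $144$). A reflection is a linear map of $\mathbb{C}^2$ whose fixed space has dimension $1$. Let $S$ be the $G_7$-conjugacy class of $s$ (six reflections of order $2$), $R_1$ the $G_7$-conjugacy class of $t$ (four reflections of order $3$), and $R_1^{-1}=\{r^{-1}:r\in R_1\}$. Let $G_6=\langle s,t\rangle$, of order $48$; its fourteen reflections are the elements of $R_1\cup R_1^{-1}\cup S$, and $R_1$, $R_1^{-1}$, $S$ are its reflection conjugacy classes. *)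

(* Defs.v *)
From HB Require Import structures.
From mathcomp Require Import all_boot all_order all_algebra all_field.
Set Implicit Arguments. Unset Strict Implicit. Unset Printing Implicit Defensive.
Import Order.TTheory GRing.Theory Num.Theory.
Local Open Scope ring_scope.

Notation mx2 := ('M[algC]_2).

Inductive gen (X : mx2 -> Prop) : mx2 -> Prop :=
  | gen_one : gen X 1%:M
  | gen_in x : X x -> gen X x
  | gen_mul x y : gen X x -> gen X y -> gen X (x *m y)
  | gen_inv x : gen X x -> gen X (invmx x).

Definition sq3 : algC := sqrtC 3%:R.

Definition mat_s : mx2 := \matrix_(i < 2, j < 2)
  (if i == j then (if i == 0 then 1 else -1) else 0).

Definition mat_t : mx2 :=
  let a := (1 + sq3) + (-1 + sq3) * 'i in
  let b := (-1 + sq3) - (1 + sq3) * 'i in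
  let c := (1 - sq3) + (1 + sq3) * 'i in
  (4%:R)^-1 *: \matrix_(i < 2, j < 2)
     (if i == 0 then a else if j == 0 then b else c).

Definition mat_u : mx2 := mat_t^T.

Definition G7 : mx2 -> Prop := gen (fun x => x = mat_s \/ x = mat_t \/ x = mat_u).
Definition G6 : mx2 -> Prop := gen (fun x => x = mat_s \/ x = mat_t).

Definition conj_class (G : mx2 -> Prop) (a : mx2) : mx2 -> Prop :=
  fun x => exists2 g, G g & x = invmx g *m a *m g.

Definition S_cl : mx2 -> Prop := conj_class G7 mat_s.
Definition R1 : mx2 -> Prop := conj_class G7 mat_t.
Definition R1inv : mx2 -> Prop := fun x => exists2 r, R1 r & x = invmx r.
Definition Rprime : mx2 -> Prop := fun x => R1 x \/ R1inv x.

Definition is_reflection (A : mx2) : Prop := \rank (kermx (A - 1%:M)) = 1%N.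

(* Main.v *)
Require Import Defs.
From HB Require Import structures.
From mathcomp Require Import all_boot all_order all_algebra all_field.
From mathcomp Require Import ring.
Set Implicit Arguments. Unset Strict Implicit. Unset Printing Implicit Defensive.
Import Order.TTheory GRing.Theory Num.Theory.
Local Open Scope ring_scope.

Definition quad := (rat * rat * rat * rat)%type.
Definition qmx := (quad * quad * quad * quad)%type.
Definition fr (n : int) (d : nat) : rat := n%:~R / d%:R.

Definition emb (x : quad) : algC :=
  let: (a, b, c, d) := x in ratr a + ratr b * sq3 + ratr c * 'i + ratr d * (sq3 * 'i).

Definition mulq (x y : quad) : quad :=
  let: (a, b, c, d) := x in let: (e, f, g, h) := y in
  (a*e + 3*(b*f) - (c*g + 3*(d*h)), a*f + b*e - (c*h + d*g),
   a*g + 3*(b*h) + (c*e + 3*(d*f)), a*h + b*g + (c*f + d*e)).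

Definition addq (x y : quad) : quad :=
  let: (a, b, c, d) := x in let: (e, f, g, h) := y in (a+e, b+f, c+g, d+h).

Lemma sq3_sq : sq3 * sq3 = 3.
Proof. by rewrite -expr2 /sq3 sqrtCK. Qed.

Lemma i_sq : 'i * 'i = -1 :> algC.
Proof. by rewrite -expr2 sqrCi. Qed.

Lemma key (S I a b c d e f g h : algC) : S * S = 3 -> I * I = -1 ->
  (a + b*S + c*I + d*(S*I)) * (e + f*S + g*I + h*(S*I)) =
  (a*e + 3*(b*f) - (c*g + 3*(d*h))) + (a*f + b*e - (c*h + d*g))*S
  + (a*g + 3*(b*h) + (c*e + 3*(d*f)))*I + (a*h + b*g + (c*f + d*e))*(S*I).
Proof.
move=> hS hI; apply/eqP; rewrite -subr_eq0; apply/eqP.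
transitivity ((S*S - 3) * (b*f - d*h + (b*h + d*f)*I) + (I*I + 1) * ((c + d*S)*(g + h*S))).
  by ring.
by rewrite hS hI subrr addNr !mul0r addr0.
Qed.

Lemma emb_mul x y : emb (mulq x y) = emb x * emb y.
Proof.
case: x => [[[a b] c] d]; case: y => [[[e f] g] h]; rewrite /emb /mulq.
rewrite (key _ _ _ _ _ _ _ _ sq3_sq i_sq).
rewrite !(rmorphD, rmorphB, rmorphN, rmorphM, rmorph1). ring.
Qed.

Lemma emb_add x y : emb (addq x y) = emb x + emb y.
Proof.
case: x => [[[a b] c] d]; case: y => [[[e f] g] h]; rewrite /emb /addq.
rewrite !rmorphD; ring.
Qed.

Definition embM (m : qmx) : mx2 :=
  let: (p, q, r, w) := m in
  \matrix_(i < 2, j < 2)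
    (if i == 0 then (if j == 0 then emb p else emb q)
     else (if j == 0 then emb r else emb w)).

Definition mulQM (A B : qmx) : qmx :=
  let: (a0, a1, a2, a3) := A in let: (b0, b1, b2, b3) := B in
  (addq (mulq a0 b0) (mulq a1 b2), addq (mulq a0 b1) (mulq a1 b3),
   addq (mulq a2 b0) (mulq a3 b2), addq (mulq a2 b1) (mulq a3 b3)).

Lemma embM_mul A B : embM (mulQM A B) = embM A *m embM B.
Proof.
case: A => [[[a0 a1] a2] a3]; case: B => [[[b0 b1] b2] b3].
apply/matrixP => i j; rewrite !mxE !big_ord_recl big_ord0 !mxE.
case: i => [[|[|//]] Hi]; case: j => [[|[|//]] Hj] /=;
  by rewrite addr0 !emb_add !emb_mul.
Qed.

Definition q0 : quad := (0, 0, 0, 0).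
Definition q1 : quad := (1, 0, 0, 0).
Definition IQ : qmx := (q1, q0, q0, q1).
Definition sQ : qmx := (q1, q0, q0, (-1, 0, 0, 0)).
Definition qa : quad := (fr 1 4, fr 1 4, fr (-1) 4, fr 1 4).
Definition qb : quad := (fr (-1) 4, fr 1 4, fr (-1) 4, fr (-1) 4).
Definition qc : quad := (fr 1 4, fr (-1) 4, fr 1 4, fr 1 4).
Definition tQ : qmx := (qa, qa, qb, qc).
Definition uQ : qmx := (qa, qb, qa, qc).

Lemma ratr_fr n d : ratr (fr n d) = n%:~R / d%:R :> algC.
Proof. by rewrite /fr rmorphM fmorphV rmorph_int rmorph_nat. Qed.

Lemma embM_I : embM IQ = 1%:M.
Proof.
apply/matrixP => i j; rewrite !mxE.
case: i => [[|[|//]] Hi]; case: j => [[|[|//]] Hj] /=;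
  rewrite /emb !(rmorph0, rmorph1); ring.
Qed.

Lemma embM_s : embM sQ = mat_s.
Proof.
apply/matrixP => i j; rewrite !mxE.
case: i => [[|[|//]] Hi]; case: j => [[|[|//]] Hj] /=;
  rewrite /emb !(rmorph0, rmorph1, rmorphN); ring.
Qed.

Lemma embM_t : embM tQ = mat_t.
Proof.
apply/matrixP => i j; rewrite !mxE.
case: i => [[|[|//]] Hi]; case: j => [[|[|//]] Hj] /=;
  rewrite /emb !ratr_fr; field; by rewrite ?pnatr_eq0.
Qed.

Lemma embM_u : embM uQ = mat_u.
Proof.
apply/matrixP => i j; rewrite !mxE.
case: i => [[|[|//]] Hi]; case: j => [[|[|//]] Hj] /=;
  rewrite /emb !ratr_fr; field; by rewrite ?pnatr_eq0.
Qed.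
Definition LSq : seq qmx := [:: (((fr (-1) 1), 0, 0, 0), (0, 0, 0, 0), (0, 0, 0, 0), ((fr (1) 1), 0, 0, 0));
  ((0, 0, 0, 0), ((fr (-1) 1), 0, 0, 0), ((fr (-1) 1), 0, 0, 0), (0, 0, 0, 0));
  ((0, 0, 0, 0), (0, 0, (fr (-1) 1), 0), (0, 0, (fr (1) 1), 0), (0, 0, 0, 0));
  ((0, 0, 0, 0), (0, 0, (fr (1) 1), 0), (0, 0, (fr (-1) 1), 0), (0, 0, 0, 0));
  ((0, 0, 0, 0), ((fr (1) 1), 0, 0, 0), ((fr (1) 1), 0, 0, 0), (0, 0, 0, 0));
  (((fr (1) 1), 0, 0, 0), (0, 0, 0, 0), (0, 0, 0, 0), ((fr (-1) 1), 0, 0, 0))].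
Definition LRq : seq qmx := [:: (((fr (1) 4), (fr (-1) 4), (fr (1) 4), (fr (1) 4)), ((fr (-1) 4), (fr (1) 4), (fr (-1) 4), (fr (-1) 4)), ((fr (1) 4), (fr (1) 4), (fr (-1) 4), (fr (1) 4)), ((fr (1) 4), (fr (1) 4), (fr (-1) 4), (fr (1) 4)));
  (((fr (1) 4), (fr (-1) 4), (fr (1) 4), (fr (1) 4)), ((fr (1) 4), (fr (-1) 4), (fr (1) 4), (fr (1) 4)), ((fr (-1) 4), (fr (-1) 4), (fr (1) 4), (fr (-1) 4)), ((fr (1) 4), (fr (1) 4), (fr (-1) 4), (fr (1) 4)));
  (((fr (1) 4), (fr (1) 4), (fr (-1) 4), (fr (1) 4)), ((fr (-1) 4), (fr (-1) 4), (fr (1) 4), (fr (-1) 4)), ((fr (1) 4), (fr (-1) 4), (fr (1) 4), (fr (1) 4)), ((fr (1) 4), (fr (-1) 4), (fr (1) 4), (fr (1) 4)));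
  (((fr (1) 4), (fr (1) 4), (fr (-1) 4), (fr (1) 4)), ((fr (1) 4), (fr (1) 4), (fr (-1) 4), (fr (1) 4)), ((fr (-1) 4), (fr (1) 4), (fr (-1) 4), (fr (-1) 4)), ((fr (1) 4), (fr (-1) 4), (fr (1) 4), (fr (1) 4)))].
Definition wdata : seq (qmx * qmx * seq bool * seq bool) := [:: ((((fr (1) 4), (fr (-1) 4), (fr (1) 4), (fr (1) 4)), ((fr (-1) 4), (fr (1) 4), (fr (-1) 4), (fr (-1) 4)), ((fr (1) 4), (fr (1) 4), (fr (-1) 4), (fr (1) 4)), ((fr (1) 4), (fr (1) 4), (fr (-1) 4), (fr (1) 4))), (((fr (-1) 1), 0, 0, 0), (0, 0, 0, 0), (0, 0, 0, 0), ((fr (1) 1), 0, 0, 0)), [:: false; false; true; false; true; false; false; true; false], [:: false; false; true; false; true; false]);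
  ((((fr (1) 4), (fr (-1) 4), (fr (1) 4), (fr (1) 4)), ((fr (-1) 4), (fr (1) 4), (fr (-1) 4), (fr (-1) 4)), ((fr (1) 4), (fr (1) 4), (fr (-1) 4), (fr (1) 4)), ((fr (1) 4), (fr (1) 4), (fr (-1) 4), (fr (1) 4))), ((0, 0, 0, 0), ((fr (-1) 1), 0, 0, 0), ((fr (-1) 1), 0, 0, 0), (0, 0, 0, 0)), [:: false; true; false; false], [:: true; false; true]);
  ((((fr (1) 4), (fr (-1) 4), (fr (1) 4), (fr (1) 4)), ((fr (-1) 4), (fr (1) 4), (fr (-1) 4), (fr (-1) 4)), ((fr (1) 4), (fr (1) 4), (fr (-1) 4), (fr (1) 4)), ((fr (1) 4), (fr (1) 4), (fr (-1) 4), (fr (1) 4))), ((0, 0, 0, 0), (0, 0, (fr (-1) 1), 0), (0, 0, (fr (1) 1), 0), (0, 0, 0, 0)), [:: true; false; false; true; false; true], [:: false; true; false; true; false; false]);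
  ((((fr (1) 4), (fr (-1) 4), (fr (1) 4), (fr (1) 4)), ((fr (-1) 4), (fr (1) 4), (fr (-1) 4), (fr (-1) 4)), ((fr (1) 4), (fr (1) 4), (fr (-1) 4), (fr (1) 4)), ((fr (1) 4), (fr (1) 4), (fr (-1) 4), (fr (1) 4))), ((0, 0, 0, 0), (0, 0, (fr (1) 1), 0), (0, 0, (fr (-1) 1), 0), (0, 0, 0, 0)), [:: false; false; true; false], [:: false; true; false; true; false; false]);
  ((((fr (1) 4), (fr (-1) 4), (fr (1) 4), (fr (1) 4)), ((fr (-1) 4), (fr (1) 4), (fr (-1) 4), (fr (-1) 4)), ((fr (1) 4), (fr (1) 4), (fr (-1) 4), (fr (1) 4)), ((fr (1) 4), (fr (1) 4), (fr (-1) 4), (fr (1) 4))), ((0, 0, 0, 0), ((fr (1) 1), 0, 0, 0), ((fr (1) 1), 0, 0, 0), (0, 0, 0, 0)), [:: true; false; true; false; false; true], [:: true; false; true]);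
  ((((fr (1) 4), (fr (-1) 4), (fr (1) 4), (fr (1) 4)), ((fr (-1) 4), (fr (1) 4), (fr (-1) 4), (fr (-1) 4)), ((fr (1) 4), (fr (1) 4), (fr (-1) 4), (fr (1) 4)), ((fr (1) 4), (fr (1) 4), (fr (-1) 4), (fr (1) 4))), (((fr (1) 1), 0, 0, 0), (0, 0, 0, 0), (0, 0, 0, 0), ((fr (-1) 1), 0, 0, 0)), [:: true], [:: false; false; true; false; true; false]);
  ((((fr (1) 4), (fr (-1) 4), (fr (1) 4), (fr (1) 4)), ((fr (1) 4), (fr (-1) 4), (fr (1) 4), (fr (1) 4)), ((fr (-1) 4), (fr (-1) 4), (fr (1) 4), (fr (-1) 4)), ((fr (1) 4), (fr (1) 4), (fr (-1) 4), (fr (1) 4))), (((fr (-1) 1), 0, 0, 0), (0, 0, 0, 0), (0, 0, 0, 0), ((fr (1) 1), 0, 0, 0)), [:: false; false; true; false; true; false; false; true; false], [:: false; true; false; true; false; false]);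
  ((((fr (1) 4), (fr (-1) 4), (fr (1) 4), (fr (1) 4)), ((fr (1) 4), (fr (-1) 4), (fr (1) 4), (fr (1) 4)), ((fr (-1) 4), (fr (-1) 4), (fr (1) 4), (fr (-1) 4)), ((fr (1) 4), (fr (1) 4), (fr (-1) 4), (fr (1) 4))), ((0, 0, 0, 0), ((fr (-1) 1), 0, 0, 0), ((fr (-1) 1), 0, 0, 0), (0, 0, 0, 0)), [:: true; false; true; false; false; true], [:: false; false; true; false; true; false]);
  ((((fr (1) 4), (fr (-1) 4), (fr (1) 4), (fr (1) 4)), ((fr (1) 4), (fr (-1) 4), (fr (1) 4), (fr (1) 4)), ((fr (-1) 4), (fr (-1) 4), (fr (1) 4), (fr (-1) 4)), ((fr (1) 4), (fr (1) 4), (fr (-1) 4), (fr (1) 4))), ((0, 0, 0, 0), (0, 0, (fr (-1) 1), 0), (0, 0, (fr (1) 1), 0), (0, 0, 0, 0)), [:: false; false; true; false], [:: true; false; true]);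
  ((((fr (1) 4), (fr (-1) 4), (fr (1) 4), (fr (1) 4)), ((fr (1) 4), (fr (-1) 4), (fr (1) 4), (fr (1) 4)), ((fr (-1) 4), (fr (-1) 4), (fr (1) 4), (fr (-1) 4)), ((fr (1) 4), (fr (1) 4), (fr (-1) 4), (fr (1) 4))), ((0, 0, 0, 0), (0, 0, (fr (1) 1), 0), (0, 0, (fr (-1) 1), 0), (0, 0, 0, 0)), [:: true; false; false; true; false; true], [:: true; false; true]);
  ((((fr (1) 4), (fr (-1) 4), (fr (1) 4), (fr (1) 4)), ((fr (1) 4), (fr (-1) 4), (fr (1) 4), (fr (1) 4)), ((fr (-1) 4), (fr (-1) 4), (fr (1) 4), (fr (-1) 4)), ((fr (1) 4), (fr (1) 4), (fr (-1) 4), (fr (1) 4))), ((0, 0, 0, 0), ((fr (1) 1), 0, 0, 0), ((fr (1) 1), 0, 0, 0), (0, 0, 0, 0)), [:: false; true; false; false], [:: false; false; true; false; true; false]);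
  ((((fr (1) 4), (fr (-1) 4), (fr (1) 4), (fr (1) 4)), ((fr (1) 4), (fr (-1) 4), (fr (1) 4), (fr (1) 4)), ((fr (-1) 4), (fr (-1) 4), (fr (1) 4), (fr (-1) 4)), ((fr (1) 4), (fr (1) 4), (fr (-1) 4), (fr (1) 4))), (((fr (1) 1), 0, 0, 0), (0, 0, 0, 0), (0, 0, 0, 0), ((fr (-1) 1), 0, 0, 0)), [:: true], [:: false; true; false; true; false; false]);
  ((((fr (1) 4), (fr (1) 4), (fr (-1) 4), (fr (1) 4)), ((fr (-1) 4), (fr (-1) 4), (fr (1) 4), (fr (-1) 4)), ((fr (1) 4), (fr (-1) 4), (fr (1) 4), (fr (1) 4)), ((fr (1) 4), (fr (-1) 4), (fr (1) 4), (fr (1) 4))), (((fr (-1) 1), 0, 0, 0), (0, 0, 0, 0), (0, 0, 0, 0), ((fr (1) 1), 0, 0, 0)), [:: false; false; true; false; true; false; false; true; false], [:: true; false; true]);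
  ((((fr (1) 4), (fr (1) 4), (fr (-1) 4), (fr (1) 4)), ((fr (-1) 4), (fr (-1) 4), (fr (1) 4), (fr (-1) 4)), ((fr (1) 4), (fr (-1) 4), (fr (1) 4), (fr (1) 4)), ((fr (1) 4), (fr (-1) 4), (fr (1) 4), (fr (1) 4))), ((0, 0, 0, 0), ((fr (-1) 1), 0, 0, 0), ((fr (-1) 1), 0, 0, 0), (0, 0, 0, 0)), [:: false; true; false; false], [:: false; true; false; true; false; false]);
  ((((fr (1) 4), (fr (1) 4), (fr (-1) 4), (fr (1) 4)), ((fr (-1) 4), (fr (-1) 4), (fr (1) 4), (fr (-1) 4)), ((fr (1) 4), (fr (-1) 4), (fr (1) 4), (fr (1) 4)), ((fr (1) 4), (fr (-1) 4), (fr (1) 4), (fr (1) 4))), ((0, 0, 0, 0), (0, 0, (fr (-1) 1), 0), (0, 0, (fr (1) 1), 0), (0, 0, 0, 0)), [:: false; false; true; false], [:: false; false; true; false; true; false]);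
  ((((fr (1) 4), (fr (1) 4), (fr (-1) 4), (fr (1) 4)), ((fr (-1) 4), (fr (-1) 4), (fr (1) 4), (fr (-1) 4)), ((fr (1) 4), (fr (-1) 4), (fr (1) 4), (fr (1) 4)), ((fr (1) 4), (fr (-1) 4), (fr (1) 4), (fr (1) 4))), ((0, 0, 0, 0), (0, 0, (fr (1) 1), 0), (0, 0, (fr (-1) 1), 0), (0, 0, 0, 0)), [:: true; false; false; true; false; true], [:: false; false; true; false; true; false]);
  ((((fr (1) 4), (fr (1) 4), (fr (-1) 4), (fr (1) 4)), ((fr (-1) 4), (fr (-1) 4), (fr (1) 4), (fr (-1) 4)), ((fr (1) 4), (fr (-1) 4), (fr (1) 4), (fr (1) 4)), ((fr (1) 4), (fr (-1) 4), (fr (1) 4), (fr (1) 4))), ((0, 0, 0, 0), ((fr (1) 1), 0, 0, 0), ((fr (1) 1), 0, 0, 0), (0, 0, 0, 0)), [:: true; false; true; false; false; true], [:: false; true; false; true; false; false]);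
  ((((fr (1) 4), (fr (1) 4), (fr (-1) 4), (fr (1) 4)), ((fr (-1) 4), (fr (-1) 4), (fr (1) 4), (fr (-1) 4)), ((fr (1) 4), (fr (-1) 4), (fr (1) 4), (fr (1) 4)), ((fr (1) 4), (fr (-1) 4), (fr (1) 4), (fr (1) 4))), (((fr (1) 1), 0, 0, 0), (0, 0, 0, 0), (0, 0, 0, 0), ((fr (-1) 1), 0, 0, 0)), [:: true], [:: true; false; true]);
  ((((fr (1) 4), (fr (1) 4), (fr (-1) 4), (fr (1) 4)), ((fr (1) 4), (fr (1) 4), (fr (-1) 4), (fr (1) 4)), ((fr (-1) 4), (fr (1) 4), (fr (-1) 4), (fr (-1) 4)), ((fr (1) 4), (fr (-1) 4), (fr (1) 4), (fr (1) 4))), (((fr (-1) 1), 0, 0, 0), (0, 0, 0, 0), (0, 0, 0, 0), ((fr (1) 1), 0, 0, 0)), [:: false; false; true; false; true; false; false; true; false], [:: false]);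
  ((((fr (1) 4), (fr (1) 4), (fr (-1) 4), (fr (1) 4)), ((fr (1) 4), (fr (1) 4), (fr (-1) 4), (fr (1) 4)), ((fr (-1) 4), (fr (1) 4), (fr (-1) 4), (fr (-1) 4)), ((fr (1) 4), (fr (-1) 4), (fr (1) 4), (fr (1) 4))), ((0, 0, 0, 0), ((fr (-1) 1), 0, 0, 0), ((fr (-1) 1), 0, 0, 0), (0, 0, 0, 0)), [:: true; false; true; false; false; true], [:: false]);
  ((((fr (1) 4), (fr (1) 4), (fr (-1) 4), (fr (1) 4)), ((fr (1) 4), (fr (1) 4), (fr (-1) 4), (fr (1) 4)), ((fr (-1) 4), (fr (1) 4), (fr (-1) 4), (fr (-1) 4)), ((fr (1) 4), (fr (-1) 4), (fr (1) 4), (fr (1) 4))), ((0, 0, 0, 0), (0, 0, (fr (-1) 1), 0), (0, 0, (fr (1) 1), 0), (0, 0, 0, 0)), [:: true; false; false; true; false; true], [:: false]);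
  ((((fr (1) 4), (fr (1) 4), (fr (-1) 4), (fr (1) 4)), ((fr (1) 4), (fr (1) 4), (fr (-1) 4), (fr (1) 4)), ((fr (-1) 4), (fr (1) 4), (fr (-1) 4), (fr (-1) 4)), ((fr (1) 4), (fr (-1) 4), (fr (1) 4), (fr (1) 4))), ((0, 0, 0, 0), (0, 0, (fr (1) 1), 0), (0, 0, (fr (-1) 1), 0), (0, 0, 0, 0)), [:: false; false; true; false], [:: false]);
  ((((fr (1) 4), (fr (1) 4), (fr (-1) 4), (fr (1) 4)), ((fr (1) 4), (fr (1) 4), (fr (-1) 4), (fr (1) 4)), ((fr (-1) 4), (fr (1) 4), (fr (-1) 4), (fr (-1) 4)), ((fr (1) 4), (fr (-1) 4), (fr (1) 4), (fr (1) 4))), ((0, 0, 0, 0), ((fr (1) 1), 0, 0, 0), ((fr (1) 1), 0, 0, 0), (0, 0, 0, 0)), [:: false; true; false; false], [:: false]);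
  ((((fr (1) 4), (fr (1) 4), (fr (-1) 4), (fr (1) 4)), ((fr (1) 4), (fr (1) 4), (fr (-1) 4), (fr (1) 4)), ((fr (-1) 4), (fr (1) 4), (fr (-1) 4), (fr (-1) 4)), ((fr (1) 4), (fr (-1) 4), (fr (1) 4), (fr (1) 4))), (((fr (1) 1), 0, 0, 0), (0, 0, 0, 0), (0, 0, 0, 0), ((fr (-1) 1), 0, 0, 0)), [:: true], [:: false]);
  ((((fr (1) 4), (fr (-1) 4), (fr (-1) 4), (fr (-1) 4)), ((fr (1) 4), (fr (1) 4), (fr (1) 4), (fr (-1) 4)), ((fr (-1) 4), (fr (1) 4), (fr (1) 4), (fr (1) 4)), ((fr (1) 4), (fr (1) 4), (fr (1) 4), (fr (-1) 4))), (((fr (-1) 1), 0, 0, 0), (0, 0, 0, 0), (0, 0, 0, 0), ((fr (1) 1), 0, 0, 0)), [:: false; false; true; false; true; false; false; true; false], [:: false; true; false; false; true; false; false]);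
  ((((fr (1) 4), (fr (-1) 4), (fr (-1) 4), (fr (-1) 4)), ((fr (1) 4), (fr (1) 4), (fr (1) 4), (fr (-1) 4)), ((fr (-1) 4), (fr (1) 4), (fr (1) 4), (fr (1) 4)), ((fr (1) 4), (fr (1) 4), (fr (1) 4), (fr (-1) 4))), ((0, 0, 0, 0), ((fr (-1) 1), 0, 0, 0), ((fr (-1) 1), 0, 0, 0), (0, 0, 0, 0)), [:: false; false; true; false], [:: true; false; false; true]);
  ((((fr (1) 4), (fr (-1) 4), (fr (-1) 4), (fr (-1) 4)), ((fr (1) 4), (fr (1) 4), (fr (1) 4), (fr (-1) 4)), ((fr (-1) 4), (fr (1) 4), (fr (1) 4), (fr (1) 4)), ((fr (1) 4), (fr (1) 4), (fr (1) 4), (fr (-1) 4))), ((0, 0, 0, 0), (0, 0, (fr (-1) 1), 0), (0, 0, (fr (1) 1), 0), (0, 0, 0, 0)), [:: true; false; true; false; false; true], [:: false; false; true; false; false; true; false]);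
  ((((fr (1) 4), (fr (-1) 4), (fr (-1) 4), (fr (-1) 4)), ((fr (1) 4), (fr (1) 4), (fr (1) 4), (fr (-1) 4)), ((fr (-1) 4), (fr (1) 4), (fr (1) 4), (fr (1) 4)), ((fr (1) 4), (fr (1) 4), (fr (1) 4), (fr (-1) 4))), ((0, 0, 0, 0), (0, 0, (fr (1) 1), 0), (0, 0, (fr (-1) 1), 0), (0, 0, 0, 0)), [:: false; true; false; false], [:: false; false; true; false; false; true; false]);
  ((((fr (1) 4), (fr (-1) 4), (fr (-1) 4), (fr (-1) 4)), ((fr (1) 4), (fr (1) 4), (fr (1) 4), (fr (-1) 4)), ((fr (-1) 4), (fr (1) 4), (fr (1) 4), (fr (1) 4)), ((fr (1) 4), (fr (1) 4), (fr (1) 4), (fr (-1) 4))), ((0, 0, 0, 0), ((fr (1) 1), 0, 0, 0), ((fr (1) 1), 0, 0, 0), (0, 0, 0, 0)), [:: true; false; false; true; false; true], [:: true; false; false; true]);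
  ((((fr (1) 4), (fr (-1) 4), (fr (-1) 4), (fr (-1) 4)), ((fr (1) 4), (fr (1) 4), (fr (1) 4), (fr (-1) 4)), ((fr (-1) 4), (fr (1) 4), (fr (1) 4), (fr (1) 4)), ((fr (1) 4), (fr (1) 4), (fr (1) 4), (fr (-1) 4))), (((fr (1) 1), 0, 0, 0), (0, 0, 0, 0), (0, 0, 0, 0), ((fr (-1) 1), 0, 0, 0)), [:: true], [:: false; true; false; false; true; false; false]);
  ((((fr (1) 4), (fr (-1) 4), (fr (-1) 4), (fr (-1) 4)), ((fr (-1) 4), (fr (-1) 4), (fr (-1) 4), (fr (1) 4)), ((fr (1) 4), (fr (-1) 4), (fr (-1) 4), (fr (-1) 4)), ((fr (1) 4), (fr (1) 4), (fr (1) 4), (fr (-1) 4))), (((fr (-1) 1), 0, 0, 0), (0, 0, 0, 0), (0, 0, 0, 0), ((fr (1) 1), 0, 0, 0)), [:: false; false; true; false; true; false; false; true; false], [:: false; false; true; false; false; true; false]);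
  ((((fr (1) 4), (fr (-1) 4), (fr (-1) 4), (fr (-1) 4)), ((fr (-1) 4), (fr (-1) 4), (fr (-1) 4), (fr (1) 4)), ((fr (1) 4), (fr (-1) 4), (fr (-1) 4), (fr (-1) 4)), ((fr (1) 4), (fr (1) 4), (fr (1) 4), (fr (-1) 4))), ((0, 0, 0, 0), ((fr (-1) 1), 0, 0, 0), ((fr (-1) 1), 0, 0, 0), (0, 0, 0, 0)), [:: true; false; false; true; false; true], [:: false; true; false; false; true; false; false]);
  ((((fr (1) 4), (fr (-1) 4), (fr (-1) 4), (fr (-1) 4)), ((fr (-1) 4), (fr (-1) 4), (fr (-1) 4), (fr (1) 4)), ((fr (1) 4), (fr (-1) 4), (fr (-1) 4), (fr (-1) 4)), ((fr (1) 4), (fr (1) 4), (fr (1) 4), (fr (-1) 4))), ((0, 0, 0, 0), (0, 0, (fr (-1) 1), 0), (0, 0, (fr (1) 1), 0), (0, 0, 0, 0)), [:: false; true; false; false], [:: true; false; false; true]);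
  ((((fr (1) 4), (fr (-1) 4), (fr (-1) 4), (fr (-1) 4)), ((fr (-1) 4), (fr (-1) 4), (fr (-1) 4), (fr (1) 4)), ((fr (1) 4), (fr (-1) 4), (fr (-1) 4), (fr (-1) 4)), ((fr (1) 4), (fr (1) 4), (fr (1) 4), (fr (-1) 4))), ((0, 0, 0, 0), (0, 0, (fr (1) 1), 0), (0, 0, (fr (-1) 1), 0), (0, 0, 0, 0)), [:: true; false; true; false; false; true], [:: true; false; false; true]);
  ((((fr (1) 4), (fr (-1) 4), (fr (-1) 4), (fr (-1) 4)), ((fr (-1) 4), (fr (-1) 4), (fr (-1) 4), (fr (1) 4)), ((fr (1) 4), (fr (-1) 4), (fr (-1) 4), (fr (-1) 4)), ((fr (1) 4), (fr (1) 4), (fr (1) 4), (fr (-1) 4))), ((0, 0, 0, 0), ((fr (1) 1), 0, 0, 0), ((fr (1) 1), 0, 0, 0), (0, 0, 0, 0)), [:: false; false; true; false], [:: false; true; false; false; true; false; false]);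
  ((((fr (1) 4), (fr (-1) 4), (fr (-1) 4), (fr (-1) 4)), ((fr (-1) 4), (fr (-1) 4), (fr (-1) 4), (fr (1) 4)), ((fr (1) 4), (fr (-1) 4), (fr (-1) 4), (fr (-1) 4)), ((fr (1) 4), (fr (1) 4), (fr (1) 4), (fr (-1) 4))), (((fr (1) 1), 0, 0, 0), (0, 0, 0, 0), (0, 0, 0, 0), ((fr (-1) 1), 0, 0, 0)), [:: true], [:: false; false; true; false; false; true; false]);
  ((((fr (1) 4), (fr (1) 4), (fr (1) 4), (fr (-1) 4)), ((fr (1) 4), (fr (-1) 4), (fr (-1) 4), (fr (-1) 4)), ((fr (-1) 4), (fr (-1) 4), (fr (-1) 4), (fr (1) 4)), ((fr (1) 4), (fr (-1) 4), (fr (-1) 4), (fr (-1) 4))), (((fr (-1) 1), 0, 0, 0), (0, 0, 0, 0), (0, 0, 0, 0), ((fr (1) 1), 0, 0, 0)), [:: false; false; true; false; true; false; false; true; false], [:: true; false; false; true]);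
  ((((fr (1) 4), (fr (1) 4), (fr (1) 4), (fr (-1) 4)), ((fr (1) 4), (fr (-1) 4), (fr (-1) 4), (fr (-1) 4)), ((fr (-1) 4), (fr (-1) 4), (fr (-1) 4), (fr (1) 4)), ((fr (1) 4), (fr (-1) 4), (fr (-1) 4), (fr (-1) 4))), ((0, 0, 0, 0), ((fr (-1) 1), 0, 0, 0), ((fr (-1) 1), 0, 0, 0), (0, 0, 0, 0)), [:: false; false; true; false], [:: false; false; true; false; false; true; false]);
  ((((fr (1) 4), (fr (1) 4), (fr (1) 4), (fr (-1) 4)), ((fr (1) 4), (fr (-1) 4), (fr (-1) 4), (fr (-1) 4)), ((fr (-1) 4), (fr (-1) 4), (fr (-1) 4), (fr (1) 4)), ((fr (1) 4), (fr (-1) 4), (fr (-1) 4), (fr (-1) 4))), ((0, 0, 0, 0), (0, 0, (fr (-1) 1), 0), (0, 0, (fr (1) 1), 0), (0, 0, 0, 0)), [:: false; true; false; false], [:: false; true; false; false; true; false; false]);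
  ((((fr (1) 4), (fr (1) 4), (fr (1) 4), (fr (-1) 4)), ((fr (1) 4), (fr (-1) 4), (fr (-1) 4), (fr (-1) 4)), ((fr (-1) 4), (fr (-1) 4), (fr (-1) 4), (fr (1) 4)), ((fr (1) 4), (fr (-1) 4), (fr (-1) 4), (fr (-1) 4))), ((0, 0, 0, 0), (0, 0, (fr (1) 1), 0), (0, 0, (fr (-1) 1), 0), (0, 0, 0, 0)), [:: true; false; true; false; false; true], [:: false; true; false; false; true; false; false]);
  ((((fr (1) 4), (fr (1) 4), (fr (1) 4), (fr (-1) 4)), ((fr (1) 4), (fr (-1) 4), (fr (-1) 4), (fr (-1) 4)), ((fr (-1) 4), (fr (-1) 4), (fr (-1) 4), (fr (1) 4)), ((fr (1) 4), (fr (-1) 4), (fr (-1) 4), (fr (-1) 4))), ((0, 0, 0, 0), ((fr (1) 1), 0, 0, 0), ((fr (1) 1), 0, 0, 0), (0, 0, 0, 0)), [:: true; false; false; true; false; true], [:: false; false; true; false; false; true; false]);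
  ((((fr (1) 4), (fr (1) 4), (fr (1) 4), (fr (-1) 4)), ((fr (1) 4), (fr (-1) 4), (fr (-1) 4), (fr (-1) 4)), ((fr (-1) 4), (fr (-1) 4), (fr (-1) 4), (fr (1) 4)), ((fr (1) 4), (fr (-1) 4), (fr (-1) 4), (fr (-1) 4))), (((fr (1) 1), 0, 0, 0), (0, 0, 0, 0), (0, 0, 0, 0), ((fr (-1) 1), 0, 0, 0)), [:: true], [:: true; false; false; true]);
  ((((fr (1) 4), (fr (1) 4), (fr (1) 4), (fr (-1) 4)), ((fr (-1) 4), (fr (1) 4), (fr (1) 4), (fr (1) 4)), ((fr (1) 4), (fr (1) 4), (fr (1) 4), (fr (-1) 4)), ((fr (1) 4), (fr (-1) 4), (fr (-1) 4), (fr (-1) 4))), (((fr (-1) 1), 0, 0, 0), (0, 0, 0, 0), (0, 0, 0, 0), ((fr (1) 1), 0, 0, 0)), [:: false; false; true; false; true; false; false; true; false], [:: false; false]);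
  ((((fr (1) 4), (fr (1) 4), (fr (1) 4), (fr (-1) 4)), ((fr (-1) 4), (fr (1) 4), (fr (1) 4), (fr (1) 4)), ((fr (1) 4), (fr (1) 4), (fr (1) 4), (fr (-1) 4)), ((fr (1) 4), (fr (-1) 4), (fr (-1) 4), (fr (-1) 4))), ((0, 0, 0, 0), ((fr (-1) 1), 0, 0, 0), ((fr (-1) 1), 0, 0, 0), (0, 0, 0, 0)), [:: true; false; false; true; false; true], [:: false; false]);
  ((((fr (1) 4), (fr (1) 4), (fr (1) 4), (fr (-1) 4)), ((fr (-1) 4), (fr (1) 4), (fr (1) 4), (fr (1) 4)), ((fr (1) 4), (fr (1) 4), (fr (1) 4), (fr (-1) 4)), ((fr (1) 4), (fr (-1) 4), (fr (-1) 4), (fr (-1) 4))), ((0, 0, 0, 0), (0, 0, (fr (-1) 1), 0), (0, 0, (fr (1) 1), 0), (0, 0, 0, 0)), [:: true; false; true; false; false; true], [:: false; false]);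
  ((((fr (1) 4), (fr (1) 4), (fr (1) 4), (fr (-1) 4)), ((fr (-1) 4), (fr (1) 4), (fr (1) 4), (fr (1) 4)), ((fr (1) 4), (fr (1) 4), (fr (1) 4), (fr (-1) 4)), ((fr (1) 4), (fr (-1) 4), (fr (-1) 4), (fr (-1) 4))), ((0, 0, 0, 0), (0, 0, (fr (1) 1), 0), (0, 0, (fr (-1) 1), 0), (0, 0, 0, 0)), [:: false; true; false; false], [:: false; false]);
  ((((fr (1) 4), (fr (1) 4), (fr (1) 4), (fr (-1) 4)), ((fr (-1) 4), (fr (1) 4), (fr (1) 4), (fr (1) 4)), ((fr (1) 4), (fr (1) 4), (fr (1) 4), (fr (-1) 4)), ((fr (1) 4), (fr (-1) 4), (fr (-1) 4), (fr (-1) 4))), ((0, 0, 0, 0), ((fr (1) 1), 0, 0, 0), ((fr (1) 1), 0, 0, 0), (0, 0, 0, 0)), [:: false; false; true; false], [:: false; false]);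
  ((((fr (1) 4), (fr (1) 4), (fr (1) 4), (fr (-1) 4)), ((fr (-1) 4), (fr (1) 4), (fr (1) 4), (fr (1) 4)), ((fr (1) 4), (fr (1) 4), (fr (1) 4), (fr (-1) 4)), ((fr (1) 4), (fr (-1) 4), (fr (-1) 4), (fr (-1) 4))), (((fr (1) 1), 0, 0, 0), (0, 0, 0, 0), (0, 0, 0, 0), ((fr (-1) 1), 0, 0, 0)), [:: true], [:: false; false])].

Definition evalw (mr ms : qmx) (w : seq bool) : qmx :=
  foldr (fun b acc => mulQM (if b then ms else mr) acc) IQ w.

Definition findw (mr ms : qmx) : option (seq bool * seq bool) :=
  ohead [seq (d.1.2, d.2) | d <- wdata & (d.1.1.1 == mr) && (d.1.1.2 == ms)].

Definition sqQ (m : qmx) := mulQM m m.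

Definition wcheck : bool :=
  all (fun mr => all (fun ms =>
    if findw mr ms is Some (ws, wt) then
      (evalw mr ms ws == sQ) && (evalw mr ms wt == tQ) else false) LSq)
   (LRq ++ map sqQ LRq).

Lemma wcheck_ok : all (fun mr => all (fun ms =>
    if findw mr ms is Some (ws, wt) then
      (evalw mr ms ws == sQ) && (evalw mr ms wt == tQ) else false) LSq)
   (LRq ++ map sqQ LRq).
Proof. by vm_compute. Qed.

Definition conjok (L : seq qmx) (k ki : qmx) : bool :=
  (mulQM k ki == IQ) &&
  all (fun a => (mulQM (mulQM ki a) k \in L) && (mulQM (mulQM k a) ki \in L)) L.

Definition conjall (L : seq qmx) : bool :=
  [&& conjok L sQ sQ, conjok L tQ (sqQ tQ) & conjok L uQ (sqQ uQ)].

Lemma conjall_ok : conjall LSq && conjall LRq.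
Proof. by vm_compute. Qed.

Lemma misc_ok : [&& sQ \in LSq, tQ \in LRq & all (fun m => mulQM m (sqQ m) == IQ) LRq].
Proof. by vm_compute. Qed.

Definition inL (L : seq qmx) (x : mx2) : Prop := exists2 m, m \in L & x = embM m.

Lemma inv_uniq (A B : mx2) : A *m B = 1%:M -> invmx A = B.
Proof.
move=> h; have [uA _] := mulmx1_unit h.
by rewrite -[invmx A]mulmx1 -h mulmxA mulVmx // mul1mx.
Qed.

Lemma invmx_mulM (A B : mx2) : A \in unitmx -> B \in unitmx ->
  invmx (A *m B) = invmx B *m invmx A.
Proof.
move=> uA uB; apply: inv_uniq.
by rewrite mulmxA -(mulmxA A) mulmxV // mulmx1 mulmxV.
Qed.

Lemma embM_inv k ki : mulQM k ki == IQ -> invmx (embM k) = embM ki.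
Proof. by move/eqP=> h; apply: inv_uniq; rewrite -embM_mul h embM_I. Qed.

Definition Pconj (L : seq qmx) (g : mx2) : Prop :=
  [/\ g \in unitmx,
      (forall a, inL L a -> inL L (invmx g *m a *m g)) &
      (forall a, inL L a -> inL L (g *m a *m invmx g))].

Lemma Pconj_gen L k ki : conjok L k ki -> Pconj L (embM k).
Proof.
case/andP=> hk /allP hall; have hinv := embM_inv hk.
have hI : embM k *m embM ki = 1%:M by rewrite -embM_mul (eqP hk) embM_I.
split.
- by have [] := mulmx1_unit hI.
- move=> _ [m /hall /andP [h1 _] ->]; rewrite hinv -!embM_mul.
  by exists (mulQM (mulQM ki m) k).
- move=> _ [m /hall /andP [_ h2] ->]; rewrite hinv -!embM_mul.
  by exists (mulQM (mulQM k m) ki).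
Qed.

Lemma G7_conj L g : conjall L -> G7 g -> Pconj L g.
Proof.
move=> /and3P [hs ht hu]; rewrite /G7; elim.
- split; first exact: unitmx1.
  + by move=> a ha; rewrite invmx1 mul1mx mulmx1.
  + by move=> a ha; rewrite invmx1 mul1mx mulmx1.
- move=> x [->|[->|->]].
  + rewrite -embM_s; exact: Pconj_gen hs.
  + rewrite -embM_t; exact: Pconj_gen ht.
  + rewrite -embM_u; exact: Pconj_gen hu.
- move=> x y _ [ux hx1 hx2] _ [uy hy1 hy2]; split.
  + rewrite unitmx_mul ux uy; reflexivity.
  + move=> a ha; rewrite (invmx_mulM ux uy).
    have -> : invmx y *m invmx x *m a *m (x *m y) = invmx y *m (invmx x *m a *m x) *m y.
      rewrite !mulmxA; reflexivity.
    exact: hy1 (hx1 a ha).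
  + move=> a ha; rewrite (invmx_mulM ux uy).
    have -> : x *m y *m a *m (invmx y *m invmx x) = x *m (y *m a *m invmx y) *m invmx x.
      rewrite !mulmxA; reflexivity.
    exact: hx2 (hy2 a ha).
- move=> x _ [ux hx1 hx2]; split.
  + rewrite unitmx_inv; exact: ux.
  + move=> a ha; rewrite invmxK; exact: hx2.
  + move=> a ha; rewrite invmxK; exact: hx1.
Qed.

Lemma gen_word (X : mx2 -> Prop) mr ms w :
  gen X (embM mr) -> gen X (embM ms) -> gen X (embM (evalw mr ms w)).
Proof.
move=> hr hs; elim: w => [|b w IH].
- change (gen X (embM IQ)); rewrite embM_I; exact: gen_one.
- change (gen X (embM (mulQM (if b then ms else mr) (evalw mr ms w)))); rewrite embM_mul; apply: gen_mul IH; case: b; [exact: hs | exact: hr].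
Qed.

Lemma R_inL r : Rprime r -> inL (LRq ++ map sqQ LRq) r.
Proof.
have /andP [_ hR] := conjall_ok.
have /and3P [_ htin /allP hcube] := misc_ok.
have hR1 : forall r, R1 r -> inL LRq r.
  move=> r0 [g hg ->]; have [_ h1 _] := G7_conj hR hg.
  apply: h1; exists tQ; [exact: htin | exact: (esym embM_t)].
case=> [/hR1 [m hm ->] | [r' /hR1 [m hm ->] ->]].
- exists m; [rewrite mem_cat hm; reflexivity | reflexivity].
- exists (sqQ m).
  + rewrite mem_cat map_f ?orbT; [reflexivity | exact: hm].
  + apply: embM_inv; exact: hcube.
Qed.

Lemma S_inL x : S_cl x -> inL LSq x.
Proof.
have /andP [hS _] := conjall_ok.
have /and3P [hsin _ _] := misc_ok.
move=> [g hg ->]; have [_ h1 _] := G7_conj hS hg.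
apply: h1; exists sQ; [exact: hsin | exact: (esym embM_s)].
Qed.

Lemma G6_sub (X : mx2 -> Prop) g : gen X mat_s -> gen X mat_t -> G6 g -> gen X g.
Proof.
move=> gS gT; rewrite /G6; elim.
+ exact: gen_one.
+ move=> x [->|->]; [exact: gS | exact: gT].
+ move=> x y _ hx _ hy; exact: gen_mul hx hy.
+ move=> x _ hx; exact: gen_inv hx.
Qed.


Lemma st_in_gen (X : mx2 -> Prop) mr ms :
  mr \in LRq ++ map sqQ LRq -> ms \in LSq ->
  gen X (embM mr) -> gen X (embM ms) -> gen X mat_s /\ gen X mat_t.
Proof.
move=> hmr hms gr gs.
have hw := wcheck_ok.
move/allP: hw => /(_ mr hmr) /allP /(_ ms hms).
case: (findw mr ms) => [[ws wt]|]; last by [].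
move=> /andP [hws hwt]; split.
- rewrite -embM_s -(eqP hws); exact: gen_word.
- rewrite -embM_t -(eqP hwt); exact: gen_word.
Qed.

Theorem proposition3p11 (X : 'M[algC]_2 -> Prop) :
  (forall x, X x -> G6 x /\ is_reflection x) ->
  (exists2 r, X r & Rprime r) ->
  (exists2 r, X r & S_cl r) ->
  forall g, gen X g <-> G6 g.
Proof.
move=> hX [r Xr /R_inL [mr hmr er]] [sg Xs /S_inL [ms hms es]] g; split.
- elim.
  + exact: gen_one.
  + move=> x /hX [h _]; exact: h.
  + move=> x y _ hx _ hy; exact: gen_mul hx hy.
  + move=> x _ hx; exact: gen_inv hx.
- have gr : gen X (embM mr) by rewrite -er; exact: gen_in.
  have gs : gen X (embM ms) by rewrite -es; exact: gen_in.
  have [gS gT] := st_in_gen hmr hms gr gs.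
  exact: G6_sub.
Qed.
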